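(* Let $\mathcal{A}$ be a Desargues affine plane, let $O\neq I$ be points, and let $\delta$ be a dilatation of $\mathcal{A}$. Equip $\ell^{OI}$ with the skew field structure with zero $O$ and unit $I$, and the line $\delta(\ell^{OI})$ with the skew field structure with zero $\delta(O)$ and unit $\delta(I)$. Then for all $A,B,C\in\ell^{OI}$ with $B\neq C$, \[ \delta(r(A,B;C))=r(\delta(A),\delta(B);\delta(C)), \] where the ratio on the left is computed in $\ell^{OI}$ and the ratio on the right in $\delta(\ell^{OI})$.
   Context: A Desargues affine plane is an incidence structure of points and lines in which any two distinct points lie on exactly one line, through a point not on a line $\ell$ there is exactly one line disjoint from $\ell$ (Playfair), there exist three non-collinear points, and Desargues' axiom holds: if $A,B,C,A',B',C'$ are points such that the pairwise distinct lines $AA',BB',CC'$ are either all parallel or all pass through one point, and $AB\parallel A'B'$, $BC\parallel B'C'$ (with $AB\neq A'B'$, $BC\neq B'C'$, $A\ne C$, $A'\ne C'$), then $AC\parallel A'C'$. Skew field on a line: for distinct points $O,I$ and points $A,B$ on the line $\ell^{OI}$, addition is defined by: choose a point $B_1\notin\ell^{OI}$; let $P_1$ be the intersection of the line through $B_1$ parallel to $\ell^{OI}$ with the line through $A$ parallel to $OB_1$; then $A+B$ is the intersection of $\ell^{OI}$ with the line through $P_1$ parallel to $BB_1$. Multiplication is defined by: choose $B_1\notin\ell^{OI}$; let $P_1$ be the intersection of the line through $A$ parallel to $IB_1$ with the line $OB_1$; then $A\cdot B$ is the intersection of $\ell^{OI}$ with the line through $P_1$ parallel to $BB_1$. These operations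 do not depend on the choice of $B_1$ and make $(\ell^{OI},+,\cdot)$ a skew field with zero $O$ and unit $I$; the same construction applies to any line with any chosen pair of distinct points as zero and unit. $-X$ and $X^{-1}$ denote additive and multiplicative inverses, $X-Y=X+(-Y)$. Ratio of three points on such a line: $r(A,B;C)=(B-C)^{-1}(A-C)$ for $B\neq C$. A dilatation of $\mathcal{A}$ is a collineation $\delta$ such that $\delta(P)\delta(Q)\parallel PQ$ for all points $P\neq Q$. *)

(* Defs.v *)
From Stdlib Require Import ClassicalEpsilon.

Record AffinePlane := {
  Point : Type;
  Line : Type;
  incid : Point -> Line -> Prop;
  ap_line_exists : forall P Q : Point, P <> Q ->
      exists l : Line, incid P l /\ incid Q l;
  ap_line_unique : forall (P Q : Point) (l m : Line), P <> Q ->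
      incid P l -> incid Q l -> incid P m -> incid Q m -> l = m;
  ap_playfair_exists : forall (P : Point) (l : Line), ~ incid P l ->
      exists m : Line, incid P m /\ (forall X, ~ (incid X m /\ incid X l));
  ap_playfair_unique : forall (P : Point) (l m1 m2 : Line), ~ incid P l ->
      incid P m1 -> (forall X, ~ (incid X m1 /\ incid X l)) ->
      incid P m2 -> (forall X, ~ (incid X m2 /\ incid X l)) -> m1 = m2;
  ap_noncollinear : exists A B C : Point,
      ~ (exists l : Line, incid A l /\ incid B l /\ incid C l)
}.

Arguments incid {_} _ _.

Section Plane.
Variable AP : AffinePlane.
Local Notation Pt := (Point AP).
Local Notation Ln := (Line AP).

Definition parallel (l m : Ln) : Prop :=
  l = m \/ (forall X : Pt, ~ (incid X l /\ incid X m)).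

Definition desargues : Prop :=
  forall (A B C A' B' C' : Pt)
         (lAA lBB lCC lAB lAB' lBC lBC' lAC lAC' : Ln),
    A <> A' -> B <> B' -> C <> C' ->
    A <> B -> A' <> B' -> B <> C -> B' <> C' -> A <> C -> A' <> C' ->
    incid A lAA -> incid A' lAA ->
    incid B lBB -> incid B' lBB ->
    incid C lCC -> incid C' lCC ->
    incid A lAB -> incid B lAB -> incid A' lAB' -> incid B' lAB' ->
    incid B lBC -> incid C lBC -> incid B' lBC' -> incid C' lBC' ->
    incid A lAC -> incid C lAC -> incid A' lAC' -> incid C' lAC' ->
    lAA <> lBB -> lBB <> lCC -> lAA <> lCC ->
    ((parallel lAA lBB /\ parallel lBB lCC /\ parallel lAA lCC) \/
     (exists P : Pt, incid P lAA /\ incid P lBB /\ incid P lCC)) ->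
    parallel lAB lAB' -> lAB <> lAB' ->
    parallel lBC lBC' -> lBC <> lBC' ->
    parallel lAC lAC'.

Definition collineation (d : Pt -> Pt) : Prop :=
  (forall P Q, d P = d Q -> P = Q) /\
  (forall Q, exists P, d P = Q) /\
  (forall l : Ln, exists m : Ln, forall P, incid P l <-> incid (d P) m) /\
  (forall m : Ln, exists l : Ln, forall P, incid P l <-> incid (d P) m).

Definition dilatation (d : Pt -> Pt) : Prop :=
  collineation d /\
  forall (P Q : Pt) (l m : Ln), P <> Q ->
    incid P l -> incid Q l -> incid (d P) m -> incid (d Q) m ->
    parallel l m.

Definition on_line (O I Z : Pt) : Prop :=
  exists l : Ln, incid O l /\ incid I l /\ incid Z l.

(** Geometric addition on l^{OI}: S = A + B, constructed with some auxiliary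
    point B1 not on l^{OI} (the result does not depend on B1). *)
Definition is_add (O I A B S : Pt) : Prop :=
  exists (l lOB1 lBB1 m1 m2 m3 : Ln) (B1 P1 : Pt),
    incid O l /\ incid I l /\ ~ incid B1 l /\
    incid O lOB1 /\ incid B1 lOB1 /\
    incid B lBB1 /\ incid B1 lBB1 /\
    incid B1 m1 /\ parallel m1 l /\
    incid A m2 /\ parallel m2 lOB1 /\
    incid P1 m1 /\ incid P1 m2 /\
    incid P1 m3 /\ parallel m3 lBB1 /\
    incid S m3 /\ incid S l.

Definition is_mul (O I A B S : Pt) : Prop :=
  exists (l lOB1 lIB1 lBB1 m2 m3 : Ln) (B1 P1 : Pt),
    incid O l /\ incid I l /\ ~ incid B1 l /\
    incid O lOB1 /\ incid B1 lOB1 /\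
    incid I lIB1 /\ incid B1 lIB1 /\
    incid B lBB1 /\ incid B1 lBB1 /\
    incid A m2 /\ parallel m2 lIB1 /\
    incid P1 m2 /\ incid P1 lOB1 /\
    incid P1 m3 /\ parallel m3 lBB1 /\
    incid S m3 /\ incid S l.

Definition sadd (O I A B : Pt) : Pt :=
  epsilon (inhabits O) (fun S => is_add O I A B S).
Definition smul (O I A B : Pt) : Pt :=
  epsilon (inhabits O) (fun S => is_mul O I A B S).
Definition sopp (O I Y : Pt) : Pt :=
  epsilon (inhabits O) (fun Z => on_line O I Z /\ sadd O I Y Z = O).
Definition sinv (O I Y : Pt) : Pt :=
  epsilon (inhabits O) (fun Z => on_line O I Z /\ smul O I Y Z = I).
Definition ssub (O I X Y : Pt) : Pt := sadd O I X (sopp O I Y).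

Definition ratio (O I A B C : Pt) : Pt :=
  smul O I (sinv O I (ssub O I B C)) (ssub O I A C).

End Plane.

Arguments parallel {_} _ _.
Arguments desargues _ : clear implicits.
Arguments collineation {_} _.
Arguments dilatation {_} _.
Arguments on_line {_} _ _ _.
Arguments is_add {_} _ _ _ _ _.
Arguments is_mul {_} _ _ _ _ _.
Arguments sadd {_} _ _ _ _.
Arguments smul {_} _ _ _ _.
Arguments sopp {_} _ _ _.
Arguments sinv {_} _ _ _.
Arguments ssub {_} _ _ _ _.
Arguments ratio {_} _ _ _ _ _.

(* Main.v *)
Require Import Defs.
From Stdlib Require Import Classical ClassicalEpsilon.

Lemma inter_eq {AP : AffinePlane} (l m : Line AP) (X Y : Point AP) :
  l <> m -> incid X l -> incid X m -> incid Y l -> incid Y m -> X = Y.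
Proof.
  intros Hlm H1 H2 H3 H4. destruct (classic (X = Y)) as [|Hn]; auto.
  exfalso. apply Hlm. exact (ap_line_unique AP X Y l m Hn H1 H3 H2 H4).
Qed.

Lemma line_eq {AP : AffinePlane} (l m : Line AP) (X Y : Point AP) :
  X <> Y -> incid X l -> incid Y l -> incid X m -> incid Y m -> l = m.
Proof. intros. eapply ap_line_unique; eauto. Qed.

Lemma par_refl {AP : AffinePlane} (l : Line AP) : parallel l l.
Proof. left; reflexivity. Qed.

Lemma par_sym {AP : AffinePlane} (l m : Line AP) : parallel l m -> parallel m l.
Proof. intros [H|H]; [left; auto|right; intros X [H1 H2]; apply (H X); auto]. Qed.

Lemma par_eq {AP : AffinePlane} (l m : Line AP) (X : Point AP) :
  parallel l m -> incid X l -> incid X m -> l = m.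
Proof. intros [H|H] H1 H2; auto. exfalso; apply (H X); auto. Qed.

Lemma par_disj {AP : AffinePlane} (l m : Line AP) (X : Point AP) :
  parallel l m -> l <> m -> incid X l -> ~ incid X m.
Proof. intros Hp Hn H1 H2. apply Hn. eapply par_eq; eauto. Qed.

Lemma par_trans {AP : AffinePlane} (l m n : Line AP) :
  parallel l m -> parallel m n -> parallel l n.
Proof.
  intros H1 H2. destruct (classic (l = n)) as [|Hln]; [left; auto|].
  right. intros X [Xl Xn].
  destruct (classic (incid X m)) as [Xm|Xm].
  - apply Hln. rewrite (par_eq _ _ _ H1 Xl Xm). eapply par_eq; eauto.
  - apply Hln. destruct H1 as [H1|H1]; [subst; exfalso; auto|].
    destruct H2 as [H2|H2]; [subst; exfalso; auto|].
    eapply (ap_playfair_unique AP X m l n Xm Xl); auto.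
    all: intros Y [Y1 Y2]; first [apply (H1 Y); now auto | apply (H2 Y); now auto].
Qed.

Lemma par_ex {AP : AffinePlane} (P : Point AP) (l : Line AP) :
  exists m, incid P m /\ parallel m l.
Proof.
  destruct (classic (incid P l)) as [H|H].
  - exists l; split; auto; left; auto.
  - destruct (ap_playfair_exists AP P l H) as [m [H1 H2]]. exists m; split; auto.
    right; auto.
Qed.

Lemma par_uniq {AP : AffinePlane} (l m m' : Line AP) (P : Point AP) :
  incid P m -> parallel m l -> incid P m' -> parallel m' l -> m = m'.
Proof.
  intros H1 H2 H3 H4. eapply par_eq; [|exact H1|exact H3].
  eapply par_trans; eauto. apply par_sym; auto.
Qed.

Lemma meet_ex {AP : AffinePlane} (l m : Line AP) :
  ~ parallel l m -> exists X, incid X l /\ incid X m.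
Proof.
  intros H. apply NNPP; intros H'. apply H. right. intros X [H1 H2]. apply H'; eauto.
Qed.

Lemma line_ex {AP : AffinePlane} (P Q : Point AP) :
  P <> Q -> exists l, incid P l /\ incid Q l.
Proof. apply ap_line_exists. Qed.

Lemma not_par {AP : AffinePlane} (l m : Line AP) (X : Point AP) :
  l <> m -> incid X l -> incid X m -> ~ parallel l m.
Proof. intros H1 H2 H3 H4. apply H1. eapply par_eq; eauto. Qed.

Lemma off_line {AP : AffinePlane} (l : Line AP) : exists P, ~ incid P l.
Proof.
  destruct (ap_noncollinear AP) as [A [B [C H]]].
  apply NNPP; intro H'. apply H. exists l.
  repeat split; apply NNPP; intro; apply H'; eauto.
Qed.

Lemma add_generic {AP : AffinePlane} (HD : desargues AP)
  (O A B B1 B1' P1 P1' S S' : Point AP)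
  (l lOB1 lOB1' lBB1 lBB1' m1 m1' m2 m2' m3 m3' : Line AP) :
  incid O l -> incid A l -> incid B l -> A <> O ->
  ~ incid B1 l -> ~ incid B1' l -> ~ incid B1' m1 ->
  incid O lOB1 -> incid B1 lOB1 -> incid B lBB1 -> incid B1 lBB1 ->
  incid B1 m1 -> parallel m1 l -> incid A m2 -> parallel m2 lOB1 ->
  incid P1 m1 -> incid P1 m2 -> incid P1 m3 -> parallel m3 lBB1 ->
  incid S m3 -> incid S l ->
  incid O lOB1' -> incid B1' lOB1' -> incid B lBB1' -> incid B1' lBB1' ->
  incid B1' m1' -> parallel m1' l -> incid A m2' -> parallel m2' lOB1' ->
  incid P1' m1' -> incid P1' m2' -> incid P1' m3' -> parallel m3' lBB1' ->
  incid S' m3' -> incid S' l ->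
  S = S'.
Proof.
  intros Ol Al Bl AO B1l B1'l B1'm1 OlOB1 B1lOB1 BlBB1 B1lBB1 B1m1 m1l Am2 m2p P1m1 P1m2 P1m3 m3p Sm3 Sl
    OlOB1' B1'lOB1' BlBB1' B1'lBB1' B1'm1' m1'l Am2' m2'p P1'm1' P1'm2' P1'm3' m3'p S'm3' S'l.
  assert (lOB1l : lOB1 <> l) by (intro; subst; auto).
  assert (lOB1'l : lOB1' <> l) by (intro; subst; auto).
  assert (m1l' : m1 <> l) by (intro; subst; auto).
  assert (m1'l' : m1' <> l) by (intro; subst; auto).
  assert (m1m1' : m1 <> m1') by (intro; subst; auto).
  assert (pm1m1' : parallel m1 m1') by (eapply par_trans; [exact m1l|apply par_sym; auto]).
  assert (B1P1 : B1 <> P1).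
  { intro; subst P1. assert (m2 = lOB1) by (eapply par_eq; eauto). subst m2.
    apply AO. exact (inter_eq _ _ _ _ lOB1l Am2 Al OlOB1 Ol). }
  assert (B1'P1' : B1' <> P1').
  { intro; subst P1'. assert (m2' = lOB1') by (eapply par_eq; eauto). subst m2'.
    apply AO. exact (inter_eq _ _ _ _ lOB1'l Am2' Al OlOB1' Ol). }
  assert (P1l : ~ incid P1 l) by exact (par_disj _ _ _ m1l m1l' P1m1).
  assert (P1'l : ~ incid P1' l) by exact (par_disj _ _ _ m1'l m1'l' P1'm1').
  assert (P1P1' : P1 <> P1') by (intro E; rewrite <- E in P1'm1'; exact (par_disj _ _ _ pm1m1' m1m1' P1m1 P1'm1')).
  assert (B1B1' : B1 <> B1') by (intro; subst; auto).
  assert (B1O : B1 <> O) by (intro; subst; auto).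
  assert (B1'O : O <> B1') by (intro; subst; auto).
  assert (P1A : P1 <> A) by (intro; subst; auto).
  assert (AP1' : A <> P1') by (intro; subst; auto).
  assert (m2lOB1 : lOB1 <> m2).
  { intro; subst. apply AO. exact (inter_eq _ _ _ _ lOB1l Am2 Al OlOB1 Ol). }
  assert (m2lOB1' : lOB1' <> m2').
  { intro; subst. apply AO. exact (inter_eq _ _ _ _ lOB1'l Am2' Al OlOB1' Ol). }
  destruct (line_ex B1 B1' B1B1') as [k [B1k B1'k]].
  destruct (line_ex P1 P1' P1P1') as [k' [P1k' P1'k']].
  assert (kk' : parallel k k').
  { apply (HD B1 O B1' P1 A P1' m1 l m1' lOB1 m2 lOB1' m2' k k'); auto.
    - left; repeat split; auto. apply par_sym; auto.
    - apply par_sym; auto.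
    - apply par_sym; auto. }
  assert (BB1 : B <> B1) by (intro; subst; auto).
  assert (BB1' : B <> B1') by (intro; subst; auto).
  assert (Bm1 : ~ incid B m1) by (intro H; exact (par_disj _ _ _ m1l m1l' H Bl)).
  assert (lBB1m3 : lBB1 <> m3).
  { intro; subst m3. apply B1P1. eapply inter_eq; [|exact B1lBB1|exact B1m1|eauto|eauto].
    intro; subst; auto. }
  assert (BS : B <> S).
  { intro; subst S. apply lBB1m3. symmetry; eapply par_eq; eauto. }
  assert (SP1 : S <> P1) by (intro; subst; auto).
  assert (SP1' : S <> P1') by (intro; subst; auto).
  assert (kk'ne : k <> k').
  { intro; subst k'. apply B1P1. eapply inter_eq; [|exact B1k|exact B1m1|eauto|eauto].
    intro; subst; auto. }
  destruct (line_ex B B1' BB1') as [j [Bj B1'j]].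
  destruct (line_ex S P1' SP1') as [j' [Sj' P1'j']].
  assert (jj' : parallel j j').
  { apply (HD B B1 B1' S P1 P1' l m1 m1' lBB1 m3 k k' j j'); auto.
    - left; repeat split; auto; apply par_sym; auto.
    - apply par_sym; auto. }
  assert (lBB1'j : lBB1' = j) by (eapply line_eq; [exact BB1'|..]; eauto).
  subst lBB1'.
  assert (m3'j' : m3' = j').
  { exact (par_eq _ _ _ (par_trans _ _ _ m3'p jj') P1'm3' P1'j'). }
  subst m3'.
  refine (inter_eq _ _ _ _ _ Sj' Sl S'm3' S'l).
  intro E; rewrite E in P1'm3'; auto.
Qed.

Lemma mul_generic {AP : AffinePlane} (HD : desargues AP)
  (O I A B B1 B1' P1 P1' S S' : Point AP)
  (l lOB1 lOB1' lIB1 lIB1' lBB1 lBB1' m2 m2' m3 m3' : Line AP) :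
  O <> I -> incid O l -> incid I l -> incid A l -> incid B l ->
  A <> O -> A <> I -> B <> O ->
  ~ incid B1 l -> ~ incid B1' l -> ~ incid B1' lOB1 ->
  incid O lOB1 -> incid B1 lOB1 -> incid I lIB1 -> incid B1 lIB1 ->
  incid B lBB1 -> incid B1 lBB1 ->
  incid A m2 -> parallel m2 lIB1 -> incid P1 m2 -> incid P1 lOB1 ->
  incid P1 m3 -> parallel m3 lBB1 -> incid S m3 -> incid S l ->
  incid O lOB1' -> incid B1' lOB1' -> incid I lIB1' -> incid B1' lIB1' ->
  incid B lBB1' -> incid B1' lBB1' ->
  incid A m2' -> parallel m2' lIB1' -> incid P1' m2' -> incid P1' lOB1' ->
  incid P1' m3' -> parallel m3' lBB1' -> incid S' m3' -> incid S' l ->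
  S = S'.
Proof.
  intros OI Ol Il Al Bl AO AI BO B1l B1'l B1'lOB1
    OlOB1 B1lOB1 IlIB1 B1lIB1 BlBB1 B1lBB1 Am2 m2p P1m2 P1lOB1 P1m3 m3p Sm3 Sl
    OlOB1' B1'lOB1' IlIB1' B1'lIB1' BlBB1' B1'lBB1' Am2' m2'p P1'm2' P1'lOB1' P1'm3' m3'p S'm3' S'l.
  assert (lOB1l : lOB1 <> l) by (intro; subst; auto).
  assert (lOB1'l : lOB1' <> l) by (intro; subst; auto).
  assert (lIB1l : lIB1 <> l) by (intro; subst; auto).
  assert (lIB1'l : lIB1' <> l) by (intro; subst; auto).
  assert (lOO' : lOB1 <> lOB1') by (intro; subst; auto).
  assert (P1O : P1 <> O).
  { intro E; rewrite E in P1m2. assert (m2 = l) by exact (line_eq _ _ _ _ AO Am2 P1m2 Al Ol).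
    subst m2. apply lIB1l. symmetry. exact (par_eq _ _ _ m2p Il IlIB1). }
  assert (P1'O : P1' <> O).
  { intro E; rewrite E in P1'm2'. assert (m2' = l) by exact (line_eq _ _ _ _ AO Am2' P1'm2' Al Ol).
    subst m2'. apply lIB1'l. symmetry. exact (par_eq _ _ _ m2'p Il IlIB1'). }
  assert (B1P1 : B1 <> P1).
  { intro E; rewrite <- E in P1m2. assert (m2 = lIB1) by exact (par_eq _ _ _ m2p P1m2 B1lIB1).
    subst m2. apply AI. exact (inter_eq _ _ _ _ lIB1l Am2 Al IlIB1 Il). }
  assert (B1'P1' : B1' <> P1').
  { intro E; rewrite <- E in P1'm2'. assert (m2' = lIB1') by exact (par_eq _ _ _ m2'p P1'm2' B1'lIB1').
    subst m2'. apply AI. exact (inter_eq _ _ _ _ lIB1'l Am2' Al IlIB1' Il). }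
  assert (P1l : ~ incid P1 l) by (intro H; exact (P1O (inter_eq _ _ _ _ lOB1l P1lOB1 H OlOB1 Ol))).
  assert (P1'l : ~ incid P1' l) by (intro H; exact (P1'O (inter_eq _ _ _ _ lOB1'l P1'lOB1' H OlOB1' Ol))).
  assert (P1P1' : P1 <> P1').
  { intro E; rewrite <- E in P1'lOB1'. exact (P1O (inter_eq _ _ _ _ lOO' P1lOB1 P1'lOB1' OlOB1 OlOB1')). }
  assert (B1B1' : B1 <> B1') by (intro; subst; auto).
  assert (B1I : B1 <> I) by (intro; subst; auto).
  assert (IB1' : I <> B1') by (intro; subst; auto).
  assert (P1A : P1 <> A) by (intro; subst; auto).
  assert (AP1' : A <> P1') by (intro; subst; auto).
  assert (IA : I <> A) by auto.
  assert (m2ne : lIB1 <> m2).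
  { intro; subst. apply AI. exact (inter_eq _ _ _ _ lIB1l Am2 Al IlIB1 Il). }
  assert (m2ne' : lIB1' <> m2').
  { intro; subst. apply AI. exact (inter_eq _ _ _ _ lIB1'l Am2' Al IlIB1' Il). }
  destruct (line_ex B1 B1' B1B1') as [k [B1k B1'k]].
  destruct (line_ex P1 P1' P1P1') as [k' [P1k' P1'k']].
  assert (kk' : parallel k k').
  { apply (HD B1 I B1' P1 A P1' lOB1 l lOB1' lIB1 m2 lIB1' m2' k k'); auto.
    - right; exists O; auto.
    - apply par_sym; auto.
    - apply par_sym; auto. }
  assert (BB1 : B <> B1) by (intro; subst; auto).
  assert (BB1' : B <> B1') by (intro; subst; auto).
  assert (BlOB1 : ~ incid B lOB1) by (intro H; exact (BO (inter_eq _ _ _ _ lOB1l H Bl OlOB1 Ol))).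
  assert (lBB1m3 : lBB1 <> m3).
  { intro; subst m3. apply B1P1. refine (inter_eq _ _ _ _ _ B1lBB1 B1lOB1 P1m3 P1lOB1).
    intro E; rewrite E in BlBB1; auto. }
  assert (BS : B <> S).
  { intro; subst S. apply lBB1m3. symmetry; exact (par_eq _ _ _ m3p Sm3 BlBB1). }
  assert (SP1 : S <> P1) by (intro; subst; auto).
  assert (SP1' : S <> P1') by (intro; subst; auto).
  assert (kk'ne : k <> k').
  { intro; subst k'. apply B1P1. refine (inter_eq _ _ _ _ _ B1k B1lOB1 P1k' P1lOB1).
    intro E; rewrite E in B1'k; auto. }
  destruct (line_ex B B1' BB1') as [j [Bj B1'j]].
  destruct (line_ex S P1' SP1') as [j' [Sj' P1'j']].
  assert (jj' : parallel j j').
  { apply (HD B B1 B1' S P1 P1' l lOB1 lOB1' lBB1 m3 k k' j j'); auto.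
    - right; exists O; auto.
    - apply par_sym; auto. }
  assert (lBB1'j : lBB1' = j) by exact (line_eq _ _ _ _ BB1' BlBB1' B1'lBB1' Bj B1'j).
  subst lBB1'.
  assert (m3'j' : m3' = j').
  { exact (par_eq _ _ _ (par_trans _ _ _ m3'p jj') P1'm3' P1'j'). }
  subst m3'.
  refine (inter_eq _ _ _ _ _ Sj' Sl S'm3' S'l).
  intro E; rewrite E in P1'm3'; auto.
Qed.

Definition addc {AP : AffinePlane} (l : Line AP) (O A B B1 S : Point AP) : Prop :=
  exists (lOB1 lBB1 m1 m2 m3 : Line AP) (P1 : Point AP),
    incid O lOB1 /\ incid B1 lOB1 /\ incid B lBB1 /\ incid B1 lBB1 /\
    incid B1 m1 /\ parallel m1 l /\ incid A m2 /\ parallel m2 lOB1 /\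
    incid P1 m1 /\ incid P1 m2 /\ incid P1 m3 /\ parallel m3 lBB1 /\
    incid S m3 /\ incid S l.

Lemma is_add_iff {AP : AffinePlane} (O I A B S : Point AP) :
  is_add O I A B S <-> exists l B1, incid O l /\ incid I l /\ ~ incid B1 l /\ addc l O A B B1 S.
Proof.
  unfold is_add, addc; split.
  - intros (l & lOB1 & lBB1 & m1 & m2 & m3 & B1 & P1 & H).
    exists l, B1; intuition; exists lOB1, lBB1, m1, m2, m3, P1; intuition.
  - intros (l & B1 & H1 & H2 & H3 & lOB1 & lBB1 & m1 & m2 & m3 & P1 & H).
    exists l, lOB1, lBB1, m1, m2, m3, B1, P1; intuition.
Qed.

Lemma addc_ex {AP : AffinePlane} (l : Line AP) (O A B B1 : Point AP) :
  incid O l -> incid B l -> ~ incid B1 l -> exists S, addc l O A B B1 S.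
Proof.
  intros Ol Bl B1l.
  assert (OB1 : O <> B1) by (intro; subst; auto).
  assert (BB1 : B <> B1) by (intro; subst; auto).
  destruct (line_ex O B1 OB1) as [lOB1 [H1 H2]].
  destruct (line_ex B B1 BB1) as [lBB1 [H3 H4]].
  destruct (par_ex B1 l) as [m1 [H5 H6]].
  destruct (par_ex A lOB1) as [m2 [H7 H8]].
  destruct (meet_ex m1 m2) as [P1 [H9 H10]].
  { intro H. assert (lOB1 = l).
    { apply (par_eq _ _ O); auto. eapply par_trans; [apply par_sym; exact H8|].
      eapply par_trans; [apply par_sym; exact H|exact H6]. }
    subst; auto. }
  destruct (par_ex P1 lBB1) as [m3 [H11 H12]].
  destruct (meet_ex m3 l) as [S [H13 H14]].
  { intro H. assert (lBB1 = l).
    { apply (par_eq _ _ B); auto. eapply par_trans; [apply par_sym; exact H12|exact H]. }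
    subst; auto. }
  exists S, lOB1, lBB1, m1, m2, m3, P1; intuition.
Qed.

Lemma addc_AO {AP : AffinePlane} (l : Line AP) (O B B1 S : Point AP) :
  incid O l -> incid B l -> ~ incid B1 l -> addc l O O B B1 S -> S = B.
Proof.
  intros Ol Bl B1l (lOB1 & lBB1 & m1 & m2 & m3 & P1 & H1 & H2 & H3 & H4 & H5 & H6 & H7 & H8 & H9 & H10 & H11 & H12 & H13 & H14).
  assert (m2 = lOB1) by exact (par_eq _ _ _ H8 H7 H1). subst m2.
  assert (m1l : m1 <> l) by (intro; subst; auto).
  assert (m1 <> lOB1) by (intro E; apply m1l; rewrite E; rewrite E in H6; exact (par_eq _ _ _ H6 H1 Ol)).
  assert (P1 = B1) by exact (inter_eq _ _ _ _ H H9 H10 H5 H2). subst P1.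
  assert (m3 = lBB1) by exact (par_eq _ _ _ H12 H11 H4). subst m3.
  refine (inter_eq _ _ _ _ _ H13 H14 H3 Bl). intro; subst; auto.
Qed.

Lemma addc_SB {AP : AffinePlane} (l : Line AP) (O A B B1 S : Point AP) :
  incid O l -> incid A l -> incid B l -> A <> O -> ~ incid B1 l -> addc l O A B B1 S -> S <> B.
Proof.
  intros Ol Al Bl AO B1l (lOB1 & lBB1 & m1 & m2 & m3 & P1 & H1 & H2 & H3 & H4 & H5 & H6 & H7 & H8 & H9 & H10 & H11 & H12 & H13 & H14) E.
  subst S.
  assert (m3 = lBB1) by exact (par_eq _ _ _ H12 H13 H3). subst m3.
  assert (m1l : m1 <> l) by (intro; subst; auto).
  assert (lBB1 <> m1) by (intro; subst; exact (par_disj _ _ _ H6 m1l H3 Bl)).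
  assert (P1 = B1) by exact (inter_eq _ _ _ _ H H11 H9 H4 H5). subst P1.
  assert (m2 = lOB1) by exact (par_eq _ _ _ H8 H10 H2). subst m2.
  apply AO. refine (inter_eq _ _ _ _ _ H7 Al H1 Ol). intro; subst; auto.
Qed.

Lemma addc_det {AP : AffinePlane} (l : Line AP) (O A B B1 S S' : Point AP) :
  incid O l -> incid B l -> ~ incid B1 l -> addc l O A B B1 S -> addc l O A B B1 S' -> S = S'.
Proof.
  intros Ol Bl B1l (lOB1 & lBB1 & m1 & m2 & m3 & P1 & H1 & H2 & H3 & H4 & H5 & H6 & H7 & H8 & H9 & H10 & H11 & H12 & H13 & H14)
    (lOB1' & lBB1' & m1' & m2' & m3' & P1' & H1' & H2' & H3' & H4' & H5' & H6' & H7' & H8' & H9' & H10' & H11' & H12' & H13' & H14').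
  assert (OB1 : O <> B1) by (intro; subst; auto).
  assert (BB1 : B <> B1) by (intro; subst; auto).
  assert (lOB1 = lOB1') by exact (line_eq _ _ _ _ OB1 H1 H2 H1' H2'). subst lOB1'.
  assert (lBB1 = lBB1') by exact (line_eq _ _ _ _ BB1 H3 H4 H3' H4'). subst lBB1'.
  assert (m1 = m1') by exact (par_uniq _ _ _ _ H5 H6 H5' H6'). subst m1'.
  assert (m2 = m2') by exact (par_uniq _ _ _ _ H7 H8 H7' H8'). subst m2'.
  assert (m1 <> m2).
  { intro; subst m2. assert (lOB1 = l).
    { apply (par_eq _ _ O); auto. eapply par_trans; [apply par_sym; exact H8|exact H6]. }
    subst; auto. }
  assert (P1 = P1') by exact (inter_eq _ _ _ _ H H9 H10 H9' H10'). subst P1'.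
  assert (m3 = m3') by exact (par_uniq _ _ _ _ H11 H12 H11' H12'). subst m3'.
  refine (inter_eq _ _ _ _ _ H13 H14 H13' H14').
  intro; subst m3. assert (lBB1 = l) by exact (par_eq _ _ _ (par_sym _ _ H12) H3 Bl). subst; auto.
Qed.

Lemma two_points {AP : AffinePlane} (l m1 : Line AP) (O A B1 B1' : Point AP) :
  incid O l -> incid A l -> A <> O -> incid B1 m1 -> incid B1' m1 -> B1 <> B1' ->
  parallel m1 l -> m1 <> l -> (forall X, incid X l \/ incid X m1) ->
  forall Y, incid Y l -> Y = O \/ Y = A.
Proof.
  intros Ol Al AO B1m1 B1'm1 B1B1' m1l m1nl Hall Y Yl.
  apply NNPP; intro HY. apply not_or_and in HY as [YO YA].
  assert (B1l : ~ incid B1 l) by exact (par_disj _ _ _ m1l m1nl B1m1).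
  assert (B1'l : ~ incid B1' l) by exact (par_disj _ _ _ m1l m1nl B1'm1).
  assert (AB1' : A <> B1') by (intro; subst; auto).
  destruct (line_ex A B1' AB1') as [k [Ak B1'k]].
  assert (Am1 : ~ incid A m1) by (intro H; exact (par_disj _ _ _ m1l m1nl H Al)).
  assert (km1 : k <> m1) by (intro; subst; auto).
  assert (kl : k <> l) by (intro; subst; auto).
  assert (B1k : ~ incid B1 k) by (intro H; exact (B1B1' (inter_eq _ _ _ _ km1 H B1m1 B1'k B1'm1))).
  assert (Hd : forall Z, incid Z l -> Z <> A -> exists a, incid B1 a /\ incid Z a /\
             forall X, ~ (incid X a /\ incid X k)).
  { intros Z Zl ZA. assert (B1Z : B1 <> Z) by (intro; subst; auto).
    destruct (line_ex B1 Z B1Z) as [a [B1a Za]]. exists a; repeat split; auto.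
    assert (al : a <> l) by (intro; subst; auto).
    assert (Zm1 : ~ incid Z m1) by (intro H; exact (par_disj _ _ _ m1l m1nl H Zl)).
    assert (am1 : a <> m1) by (intro; subst; auto).
    intros X [Xa Xk]. destruct (Hall X) as [Xl|Xm1].
    - apply ZA. rewrite <- (inter_eq _ _ _ _ al Xa Xl Za Zl). exact (inter_eq _ _ _ _ kl Xk Xl Ak Al).
    - apply B1B1'. rewrite <- (inter_eq _ _ _ _ am1 Xa Xm1 B1a B1m1). exact (inter_eq _ _ _ _ km1 Xk Xm1 B1'k B1'm1). }
  destruct (Hd O Ol (not_eq_sym AO)) as [a [B1a [Oa Ha]]].
  destruct (Hd Y Yl YA) as [b [B1b [Yb Hb]]].
  assert (a = b) by exact (ap_playfair_unique AP B1 k a b B1k B1a Ha B1b Hb). subst b.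
  assert (al : a <> l) by (intro; subst; auto).
  exact (YO (inter_eq _ _ _ _ al Yb Yl Oa Ol)).
Qed.

Lemma addc_gen {AP : AffinePlane} (HD : desargues AP) (l : Line AP) (O A B B1 B1' S S' : Point AP) :
  incid O l -> incid A l -> incid B l -> A <> O -> ~ incid B1 l -> ~ incid B1' l ->
  (forall m1, incid B1 m1 -> parallel m1 l -> ~ incid B1' m1) ->
  addc l O A B B1 S -> addc l O A B B1' S' -> S = S'.
Proof.
  intros Ol Al Bl AO B1l B1'l Hm
    (lOB1 & lBB1 & m1 & m2 & m3 & P1 & H1 & H2 & H3 & H4 & H5 & H6 & H7 & H8 & H9 & H10 & H11 & H12 & H13 & H14)
    (lOB1' & lBB1' & m1' & m2' & m3' & P1' & H1' & H2' & H3' & H4' & H5' & H6' & H7' & H8' & H9' & H10' & H11' & H12' & H13' & H14').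
  exact (add_generic HD O A B B1 B1' P1 P1' S S' l lOB1 lOB1' lBB1 lBB1' m1 m1' m2 m2' m3 m3'
    Ol Al Bl AO B1l B1'l (Hm m1 H5 H6) H1 H2 H3 H4 H5 H6 H7 H8 H9 H10 H11 H12 H13 H14
    H1' H2' H3' H4' H5' H6' H7' H8' H9' H10' H11' H12' H13' H14').
Qed.

Lemma addc_uniq {AP : AffinePlane} (HD : desargues AP) (l : Line AP) (O A B B1 B1' S S' : Point AP) :
  incid O l -> incid A l -> incid B l -> ~ incid B1 l -> ~ incid B1' l ->
  addc l O A B B1 S -> addc l O A B B1' S' -> S = S'.
Proof.
  intros Ol Al Bl B1l B1'l H H'.
  destruct (classic (A = O)) as [AO|AO].
  { subst A. rewrite (addc_AO _ _ _ _ _ Ol Bl B1l H). symmetry; exact (addc_AO _ _ _ _ _ Ol Bl B1'l H'). }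
  destruct (classic (forall m1, incid B1 m1 -> parallel m1 l -> ~ incid B1' m1)) as [Hm|Hm].
  { exact (addc_gen HD l O A B B1 B1' S S' Ol Al Bl AO B1l B1'l Hm H H'). }
  assert (exists m1, incid B1 m1 /\ parallel m1 l /\ incid B1' m1) as [m1 [B1m1 [m1l B1'm1]]].
  { apply NNPP; intro C; apply Hm; intros m1 a b c; apply C; eauto. }
  assert (m1nl : m1 <> l) by (intro; subst; auto).
  destruct (classic (exists X, ~ incid X l /\ ~ incid X m1)) as [[X [Xl Xm1]]|HX].
  - destruct (addc_ex l O A B X Ol Bl Xl) as [S'' H''].
    transitivity S''.
    + refine (addc_gen HD l O A B B1 X S S'' Ol Al Bl AO B1l Xl _ H H'').
      intros m Bm ml Xm. rewrite (par_uniq _ _ _ _ Bm ml B1m1 m1l) in Xm. auto.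
    + refine (addc_gen HD l O A B X B1' S'' S' Ol Al Bl AO Xl B1'l _ H'' H').
      intros m Xm ml B1'm.
      assert (pmm1 : parallel m m1) by exact (par_trans _ _ _ ml (par_sym _ _ m1l)).
      assert (m <> m1) by (intro; subst; auto).
      exact (par_disj _ _ _ pmm1 H0 B1'm B1'm1).
  - assert (Hall : forall X, incid X l \/ incid X m1).
    { intro X. apply NNPP; intro C; apply HX; exists X. apply not_or_and in C; exact C. }
    destruct (classic (B1 = B1')) as [E|NE].
    { subst B1'. exact (addc_det l O A B B1 S S' Ol Bl B1l H H'). }
    pose proof (two_points l m1 O A B1 B1' Ol Al AO B1m1 B1'm1 NE m1l m1nl Hall) as T.
    assert (Sl : incid S l) by (destruct H as (? & ? & ? & ? & ? & ? & ?); intuition).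
    assert (S'l : incid S' l) by (destruct H' as (? & ? & ? & ? & ? & ? & ?); intuition).
    pose proof (addc_SB l O A B B1 S Ol Al Bl AO B1l H) as SB.
    pose proof (addc_SB l O A B B1' S' Ol Al Bl AO B1'l H') as S'B.
    destruct (T S Sl) as [->| ->]; destruct (T S' S'l) as [->| ->]; destruct (T B Bl) as [->| ->];
      congruence.
Qed.

Definition mulc {AP : AffinePlane} (l : Line AP) (O I A B B1 S : Point AP) : Prop :=
  exists (lOB1 lIB1 lBB1 m2 m3 : Line AP) (P1 : Point AP),
    incid O lOB1 /\ incid B1 lOB1 /\ incid I lIB1 /\ incid B1 lIB1 /\
    incid B lBB1 /\ incid B1 lBB1 /\
    incid A m2 /\ parallel m2 lIB1 /\ incid P1 m2 /\ incid P1 lOB1 /\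
    incid P1 m3 /\ parallel m3 lBB1 /\ incid S m3 /\ incid S l.

Lemma is_mul_iff {AP : AffinePlane} (O I A B S : Point AP) :
  is_mul O I A B S <-> exists l B1, incid O l /\ incid I l /\ ~ incid B1 l /\ mulc l O I A B B1 S.
Proof.
  unfold is_mul, mulc; split.
  - intros (l & lOB1 & lIB1 & lBB1 & m2 & m3 & B1 & P1 & H).
    exists l, B1; intuition; exists lOB1, lIB1, lBB1, m2, m3, P1; intuition.
  - intros (l & B1 & H1 & H2 & H3 & lOB1 & lIB1 & lBB1 & m2 & m3 & P1 & H).
    exists l, lOB1, lIB1, lBB1, m2, m3, B1, P1; intuition.
Qed.

Lemma lOI_ne {AP : AffinePlane} (l lOB1 lIB1 : Line AP) (O I B1 : Point AP) :
  O <> I -> incid O l -> incid I l -> ~ incid B1 l -> incid O lOB1 -> incid B1 lOB1 ->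
  incid I lIB1 -> incid B1 lIB1 -> ~ parallel lOB1 lIB1.
Proof.
  intros OI Ol Il B1l H1 H2 H3 H4 Hp.
  assert (lOB1 = lIB1) by exact (par_eq _ _ _ Hp H2 H4). subst lIB1.
  apply B1l. rewrite (line_eq _ _ _ _ OI Ol Il H1 H3). auto.
Qed.

Lemma mulc_ex {AP : AffinePlane} (l : Line AP) (O I A B B1 : Point AP) :
  O <> I -> incid O l -> incid I l -> incid B l -> ~ incid B1 l -> exists S, mulc l O I A B B1 S.
Proof.
  intros OI Ol Il Bl B1l.
  assert (OB1 : O <> B1) by (intro; subst; auto).
  assert (IB1 : I <> B1) by (intro; subst; auto).
  assert (BB1 : B <> B1) by (intro; subst; auto).
  destruct (line_ex O B1 OB1) as [lOB1 [H1 H2]].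
  destruct (line_ex I B1 IB1) as [lIB1 [H3 H4]].
  destruct (line_ex B B1 BB1) as [lBB1 [H5 H6]].
  destruct (par_ex A lIB1) as [m2 [H7 H8]].
  destruct (meet_ex m2 lOB1) as [P1 [H9 H10]].
  { intro H. apply (lOI_ne l lOB1 lIB1 O I B1); auto.
    eapply par_trans; [apply par_sym; exact H|exact H8]. }
  destruct (par_ex P1 lBB1) as [m3 [H11 H12]].
  destruct (meet_ex m3 l) as [S [H13 H14]].
  { intro H. assert (lBB1 = l).
    { apply (par_eq _ _ B); auto. eapply par_trans; [apply par_sym; exact H12|exact H]. }
    subst; auto. }
  exists S, lOB1, lIB1, lBB1, m2, m3, P1; intuition.
Qed.

Ltac dmulc H := destruct H as (lOB1 & lIB1 & lBB1 & m2 & m3 & P1 & H1 & H2 & H3 & H4 & H5 & H6 & H7 & H8 & H9 & H10 & H11 & H12 & H13 & H14).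

Lemma mulc_BO {AP : AffinePlane} (l : Line AP) (O I A B1 S : Point AP) :
  incid O l -> ~ incid B1 l -> mulc l O I A O B1 S -> S = O.
Proof.
  intros Ol B1l H. dmulc H.
  assert (OB1 : O <> B1) by (intro; subst; auto).
  assert (lBB1 = lOB1) by exact (line_eq _ _ _ _ OB1 H5 H6 H1 H2). subst lBB1.
  assert (m3 = lOB1) by exact (par_eq _ _ _ H12 H11 H10). subst m3.
  refine (inter_eq _ _ _ _ _ H13 H14 H1 Ol). intro; subst; auto.
Qed.

Lemma mulc_AO {AP : AffinePlane} (l : Line AP) (O I B B1 S : Point AP) :
  O <> I -> incid O l -> incid I l -> incid B l -> ~ incid B1 l -> mulc l O I O B B1 S -> S = O.
Proof.
  intros OI Ol Il Bl B1l H. dmulc H.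
  assert (m2 <> lOB1) by (intro; subst; exact (lOI_ne l lOB1 lIB1 O I B1 OI Ol Il B1l H1 H2 H3 H4 H8)).
  assert (P1 = O) by exact (inter_eq _ _ _ _ H H9 H10 H7 H1). subst P1.
  assert (m3 <> l).
  { intro; subst m3. assert (lBB1 = l) by exact (par_eq _ _ _ (par_sym _ _ H12) H5 Bl). subst; auto. }
  exact (inter_eq _ _ _ _ H0 H13 H14 H11 Ol).
Qed.

Lemma mulc_AI {AP : AffinePlane} (l : Line AP) (O I B B1 S : Point AP) :
  O <> I -> incid O l -> incid I l -> incid B l -> ~ incid B1 l -> mulc l O I I B B1 S -> S = B.
Proof.
  intros OI Ol Il Bl B1l H. dmulc H.
  assert (m2 = lIB1) by exact (par_eq _ _ _ H8 H7 H3). subst m2.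
  assert (lOB1 <> lIB1) by (intro E; rewrite E in H1, H2; apply (lOI_ne l lIB1 lIB1 O I B1); auto; apply par_refl).
  assert (P1 = B1) by exact (inter_eq _ _ _ _ H H10 H9 H2 H4). subst P1.
  assert (m3 = lBB1) by exact (par_eq _ _ _ H12 H11 H6). subst m3.
  refine (inter_eq _ _ _ _ _ H13 H14 H5 Bl). intro; subst; auto.
Qed.

Lemma mulc_gen {AP : AffinePlane} (HD : desargues AP) (l : Line AP) (O I A B B1 B1' S S' : Point AP) :
  O <> I -> incid O l -> incid I l -> incid A l -> incid B l -> A <> O -> A <> I -> B <> O ->
  ~ incid B1 l -> ~ incid B1' l ->
  (forall m, incid O m -> incid B1 m -> ~ incid B1' m) ->
  mulc l O I A B B1 S -> mulc l O I A B B1' S' -> S = S'.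
Proof.
  intros OI Ol Il Al Bl AO AI BO B1l B1'l Hm
    (lOB1 & lIB1 & lBB1 & m2 & m3 & P1 & H1 & H2 & H3 & H4 & H5 & H6 & H7 & H8 & H9 & H10 & H11 & H12 & H13 & H14)
    (lOB1' & lIB1' & lBB1' & m2' & m3' & P1' & H1' & H2' & H3' & H4' & H5' & H6' & H7' & H8' & H9' & H10' & H11' & H12' & H13' & H14').
  exact (mul_generic HD O I A B B1 B1' P1 P1' S S' l lOB1 lOB1' lIB1 lIB1' lBB1 lBB1' m2 m2' m3 m3'
    OI Ol Il Al Bl AO AI BO B1l B1'l (Hm lOB1 H1 H2) H1 H2 H3 H4 H5 H6 H7 H8 H9 H10 H11 H12 H13 H14
    H1' H2' H3' H4' H5' H6' H7' H8' H9' H10' H11' H12' H13' H14').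
Qed.

Lemma mulc_uniq {AP : AffinePlane} (HD : desargues AP) (l : Line AP) (O I A B B1 B1' S S' : Point AP) :
  O <> I -> incid O l -> incid I l -> incid A l -> incid B l -> ~ incid B1 l -> ~ incid B1' l ->
  mulc l O I A B B1 S -> mulc l O I A B B1' S' -> S = S'.
Proof.
  intros OI Ol Il Al Bl B1l B1'l H H'.
  destruct (classic (B = O)) as [BO|BO].
  { subst B. rewrite (mulc_BO _ _ _ _ _ _ Ol B1l H). symmetry; exact (mulc_BO _ _ _ _ _ _ Ol B1'l H'). }
  destruct (classic (A = O)) as [AO|AO].
  { subst A. rewrite (mulc_AO _ _ _ _ _ _ OI Ol Il Bl B1l H). symmetry; exact (mulc_AO _ _ _ _ _ _ OI Ol Il Bl B1'l H'). }
  destruct (classic (A = I)) as [AI|AI].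
  { subst A. rewrite (mulc_AI _ _ _ _ _ _ OI Ol Il Bl B1l H). symmetry; exact (mulc_AI _ _ _ _ _ _ OI Ol Il Bl B1'l H'). }
  destruct (classic (forall m, incid O m -> incid B1 m -> ~ incid B1' m)) as [Hm|Hm].
  { exact (mulc_gen HD l O I A B B1 B1' S S' OI Ol Il Al Bl AO AI BO B1l B1'l Hm H H'). }
  assert (exists m, incid O m /\ incid B1 m /\ incid B1' m) as [m [Om [B1m B1'm]]].
  { apply NNPP; intro C; apply Hm; intros m a b c; apply C; eauto. }
  assert (ml : m <> l) by (intro; subst; auto).
  destruct (par_ex I m) as [k [Ik km]].
  destruct (par_ex B1 l) as [n [B1n nl]].
  assert (Im : ~ incid I m) by (intro; apply ml; exact (line_eq _ _ _ _ OI Om H0 Ol Il)).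
  assert (km' : k <> m) by (intro; subst; auto).
  assert (nl' : n <> l) by (intro; subst; auto).
  destruct (meet_ex k n) as [X [Xk Xn]].
  { intro Hp. apply ml. apply (par_eq _ _ O); auto.
    eapply par_trans; [apply par_sym; exact km|]. eapply par_trans; [exact Hp|exact nl]. }
  assert (Xl : ~ incid X l) by exact (par_disj _ _ _ nl nl' Xn).
  assert (Xm : ~ incid X m) by exact (par_disj _ _ _ km km' Xk).
  destruct (mulc_ex l O I A B X OI Ol Il Bl Xl) as [S'' H''].
  assert (OB1 : O <> B1) by (intro; subst; auto).
  assert (OB1' : O <> B1') by (intro; subst; auto).
  transitivity S''.
  - refine (mulc_gen HD l O I A B B1 X S S'' OI Ol Il Al Bl AO AI BO B1l Xl _ H H'').
    intros m' Om' B1m'. rewrite (line_eq _ _ _ _ OB1 Om' B1m' Om B1m). auto.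
  - refine (mulc_gen HD l O I A B X B1' S'' S' OI Ol Il Al Bl AO AI BO Xl B1'l _ H'' H').
    intros m' Om' Xm' B1'm'. apply Xm. rewrite <- (line_eq _ _ _ _ OB1' Om' B1'm' Om B1'm). auto.
Qed.

Lemma on_line_l {AP : AffinePlane} (l : Line AP) (O I X : Point AP) :
  O <> I -> incid O l -> incid I l -> on_line O I X -> incid X l.
Proof.
  intros OI Ol Il (m & Om & Im & Xm). rewrite (line_eq _ _ _ _ OI Ol Il Om Im). auto.
Qed.

Lemma on_line_get {AP : AffinePlane} (O I X : Point AP) :
  on_line O I X -> exists l, incid O l /\ incid I l.
Proof. intros (m & ? & ? & ?); eauto. Qed.

Lemma add_uniq {AP : AffinePlane} (HD : desargues AP) (O I A B S S' : Point AP) :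
  O <> I -> on_line O I A -> on_line O I B -> is_add O I A B S -> is_add O I A B S' -> S = S'.
Proof.
  intros OI HA HB H H'. apply is_add_iff in H as (l & B1 & Ol & Il & B1l & H).
  apply is_add_iff in H' as (l' & B1' & Ol' & Il' & B1'l & H').
  assert (l' = l) by exact (line_eq _ _ _ _ OI Ol' Il' Ol Il). subst l'.
  exact (addc_uniq HD l O A B B1 B1' S S' Ol (on_line_l l O I A OI Ol Il HA)
    (on_line_l l O I B OI Ol Il HB) B1l B1'l H H').
Qed.

Lemma mul_uniq {AP : AffinePlane} (HD : desargues AP) (O I A B S S' : Point AP) :
  O <> I -> on_line O I A -> on_line O I B -> is_mul O I A B S -> is_mul O I A B S' -> S = S'.
Proof.
  intros OI HA HB H H'. apply is_mul_iff in H as (l & B1 & Ol & Il & B1l & H).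
  apply is_mul_iff in H' as (l' & B1' & Ol' & Il' & B1'l & H').
  assert (l' = l) by exact (line_eq _ _ _ _ OI Ol' Il' Ol Il). subst l'.
  exact (mulc_uniq HD l O I A B B1 B1' S S' OI Ol Il (on_line_l l O I A OI Ol Il HA)
    (on_line_l l O I B OI Ol Il HB) B1l B1'l H H').
Qed.

Lemma sadd_spec {AP : AffinePlane} (O I A B : Point AP) :
  O <> I -> on_line O I A -> on_line O I B -> is_add O I A B (sadd O I A B).
Proof.
  intros OI HA HB. unfold sadd. apply epsilon_spec.
  destruct (on_line_get O I A HA) as [l [Ol Il]].
  destruct (off_line l) as [B1 B1l].
  destruct (addc_ex l O A B B1 Ol (on_line_l l O I B OI Ol Il HB) B1l) as [S H].
  exists S. apply is_add_iff. exists l, B1; auto.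
Qed.

Lemma smul_spec {AP : AffinePlane} (O I A B : Point AP) :
  O <> I -> on_line O I A -> on_line O I B -> is_mul O I A B (smul O I A B).
Proof.
  intros OI HA HB. unfold smul. apply epsilon_spec.
  destruct (on_line_get O I A HA) as [l [Ol Il]].
  destruct (off_line l) as [B1 B1l].
  destruct (mulc_ex l O I A B B1 OI Ol Il (on_line_l l O I B OI Ol Il HB) B1l) as [S H].
  exists S. apply is_mul_iff. exists l, B1; auto.
Qed.

Lemma is_add_on {AP : AffinePlane} (O I A B S : Point AP) : is_add O I A B S -> on_line O I S.
Proof. intros (l & a1 & a2 & a3 & a4 & a5 & a6 & a7 & H). exists l; intuition. Qed.

Lemma is_mul_on {AP : AffinePlane} (O I A B S : Point AP) : is_mul O I A B S -> on_line O I S.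
Proof. intros (l & a1 & a2 & a3 & a4 & a5 & a6 & a7 & H). exists l; intuition. Qed.

Lemma sadd_on {AP : AffinePlane} (O I A B : Point AP) :
  O <> I -> on_line O I A -> on_line O I B -> on_line O I (sadd O I A B).
Proof. intros; eapply is_add_on; apply sadd_spec; auto. Qed.

Lemma smul_on {AP : AffinePlane} (O I A B : Point AP) :
  O <> I -> on_line O I A -> on_line O I B -> on_line O I (smul O I A B).
Proof. intros; eapply is_mul_on; apply smul_spec; auto. Qed.

Lemma sadd_cfg {AP : AffinePlane} (HD : desargues AP) (l : Line AP) (O I A B B1 : Point AP) :
  O <> I -> incid O l -> incid I l -> incid A l -> incid B l -> ~ incid B1 l ->
  addc l O A B B1 (sadd O I A B).
Proof.
  intros OI Ol Il Al Bl B1l.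
  destruct (addc_ex l O A B B1 Ol Bl B1l) as [S H].
  assert (HA : on_line O I A) by (exists l; auto).
  assert (HB : on_line O I B) by (exists l; auto).
  replace (sadd O I A B) with S; auto.
  apply (add_uniq HD O I A B); auto.
  - apply is_add_iff; exists l, B1; auto.
  - apply sadd_spec; auto.
Qed.

Lemma smul_cfg {AP : AffinePlane} (HD : desargues AP) (l : Line AP) (O I A B B1 : Point AP) :
  O <> I -> incid O l -> incid I l -> incid A l -> incid B l -> ~ incid B1 l ->
  mulc l O I A B B1 (smul O I A B).
Proof.
  intros OI Ol Il Al Bl B1l.
  destruct (mulc_ex l O I A B B1 OI Ol Il Bl B1l) as [S H].
  assert (HA : on_line O I A) by (exists l; auto).
  assert (HB : on_line O I B) by (exists l; auto).
  replace (smul O I A B) with S; auto.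
  apply (mul_uniq HD O I A B); auto.
  - apply is_mul_iff; exists l, B1; auto.
  - apply smul_spec; auto.
Qed.

Ltac dadd H := destruct H as (lOB1 & lBB1 & m1 & m2 & m3 & P1 & H1 & H2 & H3 & H4 & H5 & H6 & H7 & H8 & H9 & H10 & H11 & H12 & H13 & H14).
Ltac dadd' H := destruct H as (lOB1' & lBB1' & m1' & m2' & m3' & P1' & H1' & H2' & H3' & H4' & H5' & H6' & H7' & H8' & H9' & H10' & H11' & H12' & H13' & H14').

Lemma addc_inv_ex {AP : AffinePlane} (l : Line AP) (O Y B1 : Point AP) :
  incid O l -> ~ incid B1 l -> exists Z, incid Z l /\ addc l O Y Z B1 O.
Proof.
  intros Ol B1l.
  assert (OB1 : O <> B1) by (intro; subst; auto).
  destruct (line_ex O B1 OB1) as [lOB1 [H1 H2]].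
  destruct (par_ex B1 l) as [m1 [H5 H6]].
  destruct (par_ex Y lOB1) as [m2 [H7 H8]].
  destruct (meet_ex m1 m2) as [P1 [H9 H10]].
  { intro H. assert (lOB1 = l).
    { apply (par_eq _ _ O); auto. eapply par_trans; [apply par_sym; exact H8|].
      eapply par_trans; [apply par_sym; exact H|exact H6]. }
    subst; auto. }
  assert (m1l : m1 <> l) by (intro; subst; auto).
  assert (P1l : ~ incid P1 l) by exact (par_disj _ _ _ H6 m1l H9).
  assert (OP1 : O <> P1) by (intro; subst; auto).
  destruct (line_ex O P1 OP1) as [m3 [Om3 P1m3]].
  destruct (par_ex B1 m3) as [k [B1k km3]].
  destruct (meet_ex k l) as [Z [Zk Zl]].
  { intro Hp. assert (m3 = l).
    { apply (par_eq _ _ O); auto. eapply par_trans; [apply par_sym; exact km3|exact Hp]. }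
    subst; auto. }
  exists Z; split; auto. exists lOB1, k, m1, m2, m3, P1; intuition. apply par_sym; auto.
Qed.

Lemma addc_inv_uniq {AP : AffinePlane} (l : Line AP) (O Y Z Z' B1 : Point AP) :
  incid O l -> incid Z l -> incid Z' l -> ~ incid B1 l ->
  addc l O Y Z B1 O -> addc l O Y Z' B1 O -> Z = Z'.
Proof.
  intros Ol Zl Z'l B1l H H'. dadd H. dadd' H'.
  assert (OB1 : O <> B1) by (intro; subst; auto).
  assert (lOB1 = lOB1') by exact (line_eq _ _ _ _ OB1 H1 H2 H1' H2'). subst lOB1'.
  assert (m1 = m1') by exact (par_uniq _ _ _ _ H5 H6 H5' H6'). subst m1'.
  assert (m2 = m2') by exact (par_uniq _ _ _ _ H7 H8 H7' H8'). subst m2'.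
  assert (m1 <> m2).
  { intro; subst m2. assert (lOB1 = l).
    { apply (par_eq _ _ O); auto. eapply par_trans; [apply par_sym; exact H8|exact H6]. }
    subst; auto. }
  assert (P1 = P1') by exact (inter_eq _ _ _ _ H H9 H10 H9' H10'). subst P1'.
  assert (m1l : m1 <> l) by (intro; subst; auto).
  assert (P1l : ~ incid P1 l) by exact (par_disj _ _ _ H6 m1l H9).
  assert (OP1 : O <> P1) by (intro; subst; auto).
  assert (m3 = m3') by exact (line_eq _ _ _ _ OP1 H13 H11 H13' H11'). subst m3'.
  assert (lBB1 = lBB1') by exact (par_uniq _ _ _ _ H4 (par_sym _ _ H12) H4' (par_sym _ _ H12')). subst lBB1'.
  refine (inter_eq _ _ _ _ _ H3 Zl H3' Z'l). intro; subst; auto.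
Qed.

Lemma addc_cancel {AP : AffinePlane} (l : Line AP) (O B C W B1 : Point AP) :
  incid O l -> incid B l -> incid C l -> incid W l -> ~ incid B1 l ->
  addc l O B W B1 O -> addc l O C W B1 O -> B = C.
Proof.
  intros Ol Bl Cl Wl B1l H H'. dadd H. dadd' H'.
  assert (OB1 : O <> B1) by (intro; subst; auto).
  assert (WB1 : W <> B1) by (intro; subst; auto).
  assert (lOB1 = lOB1') by exact (line_eq _ _ _ _ OB1 H1 H2 H1' H2'). subst lOB1'.
  assert (lBB1 = lBB1') by exact (line_eq _ _ _ _ WB1 H3 H4 H3' H4'). subst lBB1'.
  assert (m1 = m1') by exact (par_uniq _ _ _ _ H5 H6 H5' H6'). subst m1'.
  assert (m3 = m3') by exact (par_uniq _ _ _ _ H13 H12 H13' H12'). subst m3'.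
  assert (m1l : m1 <> l) by (intro; subst; auto).
  assert (Om1 : ~ incid O m1) by (intro Hx; exact (par_disj _ _ _ H6 m1l Hx Ol)).
  assert (m1 <> m3) by (intro; subst; auto).
  assert (P1 = P1') by exact (inter_eq _ _ _ _ H H9 H11 H9' H11'). subst P1'.
  assert (m2 = m2') by exact (par_uniq _ _ _ _ H10 H8 H10' H8'). subst m2'.
  assert (P1l : ~ incid P1 l) by exact (par_disj _ _ _ H6 m1l H9).
  refine (inter_eq _ _ _ _ _ H7 Bl H7' Cl). intro; subst; auto.
Qed.

Ltac dmulc' H := destruct H as (lOB1' & lIB1' & lBB1' & m2' & m3' & P1' & H1' & H2' & H3' & H4' & H5' & H6' & H7' & H8' & H9' & H10' & H11' & H12' & H13' & H14').

Lemma mulc_inv_ex {AP : AffinePlane} (l : Line AP) (O I Y B1 : Point AP) :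
  O <> I -> incid O l -> incid I l -> incid Y l -> Y <> O -> ~ incid B1 l ->
  exists Z, incid Z l /\ mulc l O I Y Z B1 I.
Proof.
  intros OI Ol Il Yl YO B1l.
  assert (OB1 : O <> B1) by (intro; subst; auto).
  assert (IB1 : I <> B1) by (intro; subst; auto).
  destruct (line_ex O B1 OB1) as [lOB1 [H1 H2]].
  destruct (line_ex I B1 IB1) as [lIB1 [H3 H4]].
  destruct (par_ex Y lIB1) as [m2 [H7 H8]].
  destruct (meet_ex m2 lOB1) as [P1 [H9 H10]].
  { intro H. apply (lOI_ne l lOB1 lIB1 O I B1); auto.
    eapply par_trans; [apply par_sym; exact H|exact H8]. }
  assert (lOB1l : lOB1 <> l) by (intro; subst; auto).
  assert (P1O : P1 <> O).
  { intro E; rewrite E in H9. assert (m2 = l) by exact (line_eq _ _ _ _ YO H7 H9 Yl Ol).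
    subst m2. assert (lIB1 = l) by exact (par_eq _ _ _ (par_sym _ _ H8) H3 Il). subst; auto. }
  assert (P1l : ~ incid P1 l) by (intro Hx; exact (P1O (inter_eq _ _ _ _ lOB1l H10 Hx H1 Ol))).
  assert (P1I : P1 <> I) by (intro; subst; auto).
  destruct (line_ex P1 I P1I) as [m3 [P1m3 Im3]].
  destruct (par_ex B1 m3) as [k [B1k km3]].
  destruct (meet_ex k l) as [Z [Zk Zl]].
  { intro Hp. assert (m3 = l).
    { apply (par_eq _ _ I); auto. eapply par_trans; [apply par_sym; exact km3|exact Hp]. }
    subst; auto. }
  exists Z; split; auto. exists lOB1, lIB1, k, m2, m3, P1; intuition. apply par_sym; auto.
Qed.

Lemma mulc_inv_uniq {AP : AffinePlane} (l : Line AP) (O I Y Z Z' B1 : Point AP) :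
  O <> I -> incid O l -> incid I l -> incid Z l -> incid Z' l -> ~ incid B1 l ->
  mulc l O I Y Z B1 I -> mulc l O I Y Z' B1 I -> Z = Z'.
Proof.
  intros OI Ol Il Zl Z'l B1l H H'. destruct H as (lOB1 & lIB1 & lBB1 & m2 & m3 & P1 & H1 & H2 & H3 & H4 & H5 & H6 & H7 & H8 & H9 & H10 & H11 & H12 & H13 & H14).
  dmulc' H'.
  assert (OB1 : O <> B1) by (intro; subst; auto).
  assert (IB1 : I <> B1) by (intro; subst; auto).
  assert (lOB1 = lOB1') by exact (line_eq _ _ _ _ OB1 H1 H2 H1' H2'). subst lOB1'.
  assert (lIB1 = lIB1') by exact (line_eq _ _ _ _ IB1 H3 H4 H3' H4'). subst lIB1'.
  assert (m2 = m2') by exact (par_uniq _ _ _ _ H7 H8 H7' H8'). subst m2'.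
  assert (m2 <> lOB1) by (intro; subst; exact (lOI_ne l lOB1 lIB1 O I B1 OI Ol Il B1l H1 H2 H3 H4 H8)).
  assert (P1 = P1') by exact (inter_eq _ _ _ _ H H9 H10 H9' H10'). subst P1'.
  assert (lOB1l : lOB1 <> l) by (intro; subst; auto).
  assert (P1I : P1 <> I).
  { intro E; rewrite E in H10. apply B1l. rewrite (line_eq _ _ _ _ OI Ol Il H1 H10); auto. }
  assert (m3 = m3') by exact (line_eq _ _ _ _ P1I H11 H13 H11' H13'). subst m3'.
  assert (lBB1 = lBB1') by exact (par_uniq _ _ _ _ H6 (par_sym _ _ H12) H6' (par_sym _ _ H12')). subst lBB1'.
  refine (inter_eq _ _ _ _ _ H5 Zl H5' Z'l). intro; subst; auto.
Qed.

Lemma opp_ex {AP : AffinePlane} (HD : desargues AP) (O I Y : Point AP) :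
  O <> I -> on_line O I Y -> exists Z, on_line O I Z /\ sadd O I Y Z = O.
Proof.
  intros OI HY. destruct (on_line_get O I Y HY) as [l [Ol Il]].
  pose proof (on_line_l l O I Y OI Ol Il HY) as Yl.
  destruct (off_line l) as [B1 B1l].
  destruct (addc_inv_ex l O Y B1 Ol B1l) as [Z [Zl HZ]].
  exists Z. assert (HZ' : on_line O I Z) by (exists l; auto). split; auto.
  symmetry. apply (add_uniq HD O I Y Z); auto.
  - apply is_add_iff; exists l, B1; auto.
  - apply sadd_spec; auto.
Qed.

Lemma opp_uniq {AP : AffinePlane} (HD : desargues AP) (O I Y Z Z' : Point AP) :
  O <> I -> on_line O I Y -> on_line O I Z -> on_line O I Z' ->
  sadd O I Y Z = O -> sadd O I Y Z' = O -> Z = Z'.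
Proof.
  intros OI HY HZ HZ' E E'. destruct (on_line_get O I Y HY) as [l [Ol Il]].
  destruct (off_line l) as [B1 B1l].
  pose proof (sadd_cfg HD l O I Y Z B1 OI Ol Il (on_line_l l O I Y OI Ol Il HY) (on_line_l l O I Z OI Ol Il HZ) B1l) as C1.
  pose proof (sadd_cfg HD l O I Y Z' B1 OI Ol Il (on_line_l l O I Y OI Ol Il HY) (on_line_l l O I Z' OI Ol Il HZ') B1l) as C2.
  rewrite E in C1; rewrite E' in C2.
  exact (addc_inv_uniq l O Y Z Z' B1 Ol (on_line_l l O I Z OI Ol Il HZ) (on_line_l l O I Z' OI Ol Il HZ') B1l C1 C2).
Qed.

Lemma add_cancel {AP : AffinePlane} (HD : desargues AP) (O I B C W : Point AP) :
  O <> I -> on_line O I B -> on_line O I C -> on_line O I W ->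
  sadd O I B W = O -> sadd O I C W = O -> B = C.
Proof.
  intros OI HB HC HW E E'. destruct (on_line_get O I B HB) as [l [Ol Il]].
  destruct (off_line l) as [B1 B1l].
  pose proof (on_line_l l O I B OI Ol Il HB) as Bl.
  pose proof (on_line_l l O I C OI Ol Il HC) as Cl.
  pose proof (on_line_l l O I W OI Ol Il HW) as Wl.
  pose proof (sadd_cfg HD l O I B W B1 OI Ol Il Bl Wl B1l) as C1.
  pose proof (sadd_cfg HD l O I C W B1 OI Ol Il Cl Wl B1l) as C2.
  rewrite E in C1; rewrite E' in C2.
  exact (addc_cancel l O B C W B1 Ol Bl Cl Wl B1l C1 C2).
Qed.

Lemma inv_ex {AP : AffinePlane} (HD : desargues AP) (O I Y : Point AP) :
  O <> I -> on_line O I Y -> Y <> O -> exists Z, on_line O I Z /\ smul O I Y Z = I.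
Proof.
  intros OI HY YO. destruct (on_line_get O I Y HY) as [l [Ol Il]].
  pose proof (on_line_l l O I Y OI Ol Il HY) as Yl.
  destruct (off_line l) as [B1 B1l].
  destruct (mulc_inv_ex l O I Y B1 OI Ol Il Yl YO B1l) as [Z [Zl HZ]].
  exists Z. assert (HZ' : on_line O I Z) by (exists l; auto). split; auto.
  symmetry. apply (mul_uniq HD O I Y Z); auto.
  - apply is_mul_iff; exists l, B1; auto.
  - apply smul_spec; auto.
Qed.

Lemma inv_uniq {AP : AffinePlane} (HD : desargues AP) (O I Y Z Z' : Point AP) :
  O <> I -> on_line O I Y -> on_line O I Z -> on_line O I Z' ->
  smul O I Y Z = I -> smul O I Y Z' = I -> Z = Z'.
Proof.
  intros OI HY HZ HZ' E E'. destruct (on_line_get O I Y HY) as [l [Ol Il]].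
  destruct (off_line l) as [B1 B1l].
  pose proof (smul_cfg HD l O I Y Z B1 OI Ol Il (on_line_l l O I Y OI Ol Il HY) (on_line_l l O I Z OI Ol Il HZ) B1l) as C1.
  pose proof (smul_cfg HD l O I Y Z' B1 OI Ol Il (on_line_l l O I Y OI Ol Il HY) (on_line_l l O I Z' OI Ol Il HZ') B1l) as C2.
  rewrite E in C1; rewrite E' in C2.
  exact (mulc_inv_uniq l O I Y Z Z' B1 OI Ol Il (on_line_l l O I Z OI Ol Il HZ) (on_line_l l O I Z' OI Ol Il HZ') B1l C1 C2).
Qed.

Lemma sopp_spec {AP : AffinePlane} (HD : desargues AP) (O I Y : Point AP) :
  O <> I -> on_line O I Y -> on_line O I (sopp O I Y) /\ sadd O I Y (sopp O I Y) = O.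
Proof.
  intros OI HY. unfold sopp. apply (epsilon_spec (inhabits O) (fun Z => on_line O I Z /\ sadd O I Y Z = O)).
  exact (opp_ex HD O I Y OI HY).
Qed.

Lemma sinv_spec {AP : AffinePlane} (HD : desargues AP) (O I Y : Point AP) :
  O <> I -> on_line O I Y -> Y <> O -> on_line O I (sinv O I Y) /\ smul O I Y (sinv O I Y) = I.
Proof.
  intros OI HY YO. unfold sinv. apply (epsilon_spec (inhabits O) (fun Z => on_line O I Z /\ smul O I Y Z = I)).
  exact (inv_ex HD O I Y OI HY YO).
Qed.

Definition img {AP : AffinePlane} (d : Point AP -> Point AP) (l : Line AP) : Line AP :=
  epsilon (inhabits l) (fun m => forall P, incid P l <-> incid (d P) m).

Lemma img_spec {AP : AffinePlane} (d : Point AP -> Point AP) (l : Line AP) :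
  collineation d -> forall P, incid P l <-> incid (d P) (img d l).
Proof.
  intros (_ & _ & Hl & _). unfold img.
  apply (epsilon_spec (inhabits l) (fun m => forall P, incid P l <-> incid (d P) m)). apply Hl.
Qed.

Lemma img_par {AP : AffinePlane} (d : Point AP -> Point AP) (l m : Line AP) :
  collineation d -> parallel l m -> parallel (img d l) (img d m).
Proof.
  intros Hc [E|Hd]; [subst; left; auto|]. right. intros X [X1 X2].
  destruct Hc as (Hi & Hs & Hr) eqn:Hc'. destruct (Hs X) as [P <-].
  apply (Hd P); split; apply (img_spec d _ Hc); auto.
Qed.

Lemma is_add_img {AP : AffinePlane} (d : Point AP -> Point AP) (O I A B S : Point AP) :
  collineation d -> is_add O I A B S -> is_add (d O) (d I) (d A) (d B) (d S).
Proof.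
  intros Hc (l & lOB1 & lBB1 & m1 & m2 & m3 & B1 & P1 & H).
  pose proof (img_spec d l Hc) as Il. pose proof (img_spec d lOB1 Hc) as I1.
  pose proof (img_spec d lBB1 Hc) as I2. pose proof (img_spec d m1 Hc) as I3.
  pose proof (img_spec d m2 Hc) as I4. pose proof (img_spec d m3 Hc) as I5.
  exists (img d l), (img d lOB1), (img d lBB1), (img d m1), (img d m2), (img d m3), (d B1), (d P1).
  repeat match goal with
  | H : _ /\ _ |- _ => destruct H
  end.
  repeat split;
    first [ apply img_par; assumption
          | apply Il; assumption | apply I1; assumption | apply I2; assumption
          | apply I3; assumption | apply I4; assumption | apply I5; assumption
          | intro Hx; apply Il in Hx; auto ].
Qed.

Lemma is_mul_img {AP : AffinePlane} (d : Point AP -> Point AP) (O I A B S : Point AP) :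
  collineation d -> is_mul O I A B S -> is_mul (d O) (d I) (d A) (d B) (d S).
Proof.
  intros Hc (l & lOB1 & lIB1 & lBB1 & m2 & m3 & B1 & P1 & H).
  pose proof (img_spec d l Hc) as Il. pose proof (img_spec d lOB1 Hc) as I1.
  pose proof (img_spec d lBB1 Hc) as I2. pose proof (img_spec d lIB1 Hc) as I3.
  pose proof (img_spec d m2 Hc) as I4. pose proof (img_spec d m3 Hc) as I5.
  exists (img d l), (img d lOB1), (img d lIB1), (img d lBB1), (img d m2), (img d m3), (d B1), (d P1).
  repeat match goal with
  | H : _ /\ _ |- _ => destruct H
  end.
  repeat split;
    first [ apply img_par; assumption
          | apply Il; assumption | apply I1; assumption | apply I2; assumption
          | apply I3; assumption | apply I4; assumption | apply I5; assumption
          | intro Hx; apply Il in Hx; auto ].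
Qed.

Lemma on_line_img {AP : AffinePlane} (d : Point AP -> Point AP) (O I X : Point AP) :
  collineation d -> on_line O I X -> on_line (d O) (d I) (d X).
Proof.
  intros Hc (l & H1 & H2 & H3). exists (img d l).
  repeat split; apply (img_spec d l Hc); auto.
Qed.


Lemma col_inj {AP : AffinePlane} (d : Point AP -> Point AP) (P Q : Point AP) :
  collineation d -> P <> Q -> d P <> d Q.
Proof. intros (Hi & _) H E. apply H, Hi, E. Qed.

Lemma sadd_img {AP : AffinePlane} (HD : desargues AP) (d : Point AP -> Point AP) (O I A B : Point AP) :
  collineation d -> O <> I -> on_line O I A -> on_line O I B ->
  d (sadd O I A B) = sadd (d O) (d I) (d A) (d B).
Proof.
  intros Hc OI HA HB. pose proof (col_inj d O I Hc OI) as dOI.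
  apply (add_uniq HD (d O) (d I) (d A) (d B)); auto using on_line_img.
  - apply is_add_img; auto. apply sadd_spec; auto.
  - apply sadd_spec; auto using on_line_img.
Qed.

Lemma smul_img {AP : AffinePlane} (HD : desargues AP) (d : Point AP -> Point AP) (O I A B : Point AP) :
  collineation d -> O <> I -> on_line O I A -> on_line O I B ->
  d (smul O I A B) = smul (d O) (d I) (d A) (d B).
Proof.
  intros Hc OI HA HB. pose proof (col_inj d O I Hc OI) as dOI.
  apply (mul_uniq HD (d O) (d I) (d A) (d B)); auto using on_line_img.
  - apply is_mul_img; auto. apply smul_spec; auto.
  - apply smul_spec; auto using on_line_img.
Qed.

Lemma sopp_img {AP : AffinePlane} (HD : desargues AP) (d : Point AP -> Point AP) (O I Y : Point AP) :
  collineation d -> O <> I -> on_line O I Y -> d (sopp O I Y) = sopp (d O) (d I) (d Y).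
Proof.
  intros Hc OI HY. pose proof (col_inj d O I Hc OI) as dOI.
  destruct (sopp_spec HD O I Y OI HY) as [H1 H2].
  destruct (sopp_spec HD (d O) (d I) (d Y) dOI (on_line_img d O I Y Hc HY)) as [H3 H4].
  apply (opp_uniq HD (d O) (d I) (d Y)); auto using on_line_img.
  rewrite <- (sadd_img HD d O I Y (sopp O I Y) Hc OI HY H1). rewrite H2; auto.
Qed.

Lemma sinv_img {AP : AffinePlane} (HD : desargues AP) (d : Point AP -> Point AP) (O I Y : Point AP) :
  collineation d -> O <> I -> on_line O I Y -> Y <> O -> d (sinv O I Y) = sinv (d O) (d I) (d Y).
Proof.
  intros Hc OI HY YO. pose proof (col_inj d O I Hc OI) as dOI.
  destruct (sinv_spec HD O I Y OI HY YO) as [H1 H2].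
  destruct (sinv_spec HD (d O) (d I) (d Y) dOI (on_line_img d O I Y Hc HY) (col_inj d Y O Hc YO)) as [H3 H4].
  apply (inv_uniq HD (d O) (d I) (d Y)); auto using on_line_img.
  rewrite <- (smul_img HD d O I Y (sinv O I Y) Hc OI HY H1). rewrite H2; auto.
Qed.

Lemma ssub_on {AP : AffinePlane} (HD : desargues AP) (O I X Y : Point AP) :
  O <> I -> on_line O I X -> on_line O I Y -> on_line O I (ssub O I X Y).
Proof.
  intros OI HX HY. unfold ssub. apply sadd_on; auto. apply (sopp_spec HD O I Y OI HY).
Qed.

Lemma ssub_img {AP : AffinePlane} (HD : desargues AP) (d : Point AP -> Point AP) (O I X Y : Point AP) :
  collineation d -> O <> I -> on_line O I X -> on_line O I Y ->
  d (ssub O I X Y) = ssub (d O) (d I) (d X) (d Y).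
Proof.
  intros Hc OI HX HY. unfold ssub.
  rewrite (sadd_img HD d O I X (sopp O I Y) Hc OI HX (proj1 (sopp_spec HD O I Y OI HY))).
  rewrite (sopp_img HD d O I Y Hc OI HY). reflexivity.
Qed.

Theorem mainTheorem13 (AP : AffinePlane) (HD : desargues AP)
  (O I : Point AP) (d : Point AP -> Point AP) :
  O <> I -> dilatation d ->
  forall A B C : Point AP,
    on_line O I A -> on_line O I B -> on_line O I C -> B <> C ->
    d (ratio O I A B C) = ratio (d O) (d I) (d A) (d B) (d C).
Proof.
  intros OI [Hc _] A B C HA HB HC BC. unfold ratio.
  assert (HX : on_line O I (ssub O I B C)) by (apply ssub_on; auto).
  assert (HY : on_line O I (ssub O I A C)) by (apply ssub_on; auto).
  assert (XO : ssub O I B C <> O).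
  { intro E. apply BC. destruct (sopp_spec HD O I C OI HC) as [W1 W2].
    exact (add_cancel HD O I B C (sopp O I C) OI HB HC W1 E W2). }
  destruct (sinv_spec HD O I _ OI HX XO) as [HV _].
  rewrite (smul_img HD d O I _ _ Hc OI HV HY).
  rewrite (sinv_img HD d O I _ Hc OI HX XO).
  rewrite (ssub_img HD d O I B C Hc OI HB HC).
  rewrite (ssub_img HD d O I A C Hc OI HA HC).
  reflexivity.
Qed.
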